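(* $R^p(3)=\tfrac12$ and $R(4)=\tfrac13$.
   Context: A qubit POVM is a finite family $\{\Pi_i\}_{i=1}^n$ of positive semidefinite operators summing to $\mathbb{I}$; it simulates a family $\{M_{a|x}\}$ if $M_{a|x}=\sum_i p(a|x,i)\Pi_i$ with $p(a|x,i)\ge0$, $\sum_a p(a|x,i)=1$. $\mathcal{P}_r$ is the family of two-outcome POVMs $\{\tfrac12(\mathbb{I}\pm r\hat n\cdot\vec\sigma)\}$ over all unit $\hat n\in\mathbb{R}^3$, and $\mathcal{P}^p_r$ the subfamily with $\hat n=(n_x,0,n_z)$. $R(n)$ (resp. $R^p(n)$) is the supremum of $r$ such that some $n$-outcome qubit POVM simulates $\mathcal{P}_r$ (resp. $\mathcal{P}^p_r$). *)

(* Defs.v *)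
From mathcomp Require Import all_boot all_order all_algebra.
From mathcomp Require Import boolp classical_sets reals.
From mathcomp Require Import complex.
Set Implicit Arguments. Unset Strict Implicit. Unset Printing Implicit Defensive.
Import Order.TTheory GRing.Theory Num.Theory.
Local Open Scope ring_scope.
Local Open Scope complex_scope.
Local Open Scope classical_set_scope.

Section Qubit.
Variable R : realType.
Local Notation C := (R[i]).

Definition adj (A : 'M[C]_2) : 'M[C]_2 := \matrix_(i, j) (A j i)^*.

Definition psd (A : 'M[C]_2) : Prop :=
  adj A = A /\
  forall v : 'cV[C]_2, 0 <= ((\matrix_(i, j) (v j i)^* : 'rV[C]_2) *m A *m v) 0 0.

Definition sigma_x : 'M[C]_2 := \matrix_(i, j) (if i == j then 0 else 1).
Definition sigma_y : 'M[C]_2 :=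
  \matrix_(i, j) (if i == j then 0 else if (i : nat) == 0%N then - 'i else 'i).
Definition sigma_z : 'M[C]_2 :=
  \matrix_(i, j) (if i == j then (if (i : nat) == 0%N then 1 else -1) else 0).

Definition is_povm (n : nat) (Pi : 'I_n -> 'M[C]_2) : Prop :=
  (forall i, psd (Pi i)) /\ \sum_(i < n) Pi i = 1%:M.

(* the two-outcome POVM { 1/2 (I + s r n.sigma) }, a = true for '+', false for '-' *)
Definition noisy_meas (r nx ny nz : R) (a : bool) : 'M[C]_2 :=
  (1/2 : R)%:C *: (1%:M + (if a then 1 else -1) *: (r%:C *:
     (nx%:C *: sigma_x + ny%:C *: sigma_y + nz%:C *: sigma_z))).

Definition simulates_meas (n : nat) (Pi : 'I_n -> 'M[C]_2) (r nx ny nz : R) : Prop :=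
  exists p : bool -> 'I_n -> R,
    (forall a i, 0 <= p a i) /\ (forall i, p true i + p false i = 1) /\
    (forall a, noisy_meas r nx ny nz a = \sum_(i < n) (p a i)%:C *: Pi i).

Definition simulates_P (n : nat) (Pi : 'I_n -> 'M[C]_2) (r : R) : Prop :=
  forall nx ny nz : R, nx ^+ 2 + ny ^+ 2 + nz ^+ 2 = 1 ->
    simulates_meas Pi r nx ny nz.

Definition simulates_Pp (n : nat) (Pi : 'I_n -> 'M[C]_2) (r : R) : Prop :=
  forall nx nz : R, nx ^+ 2 + nz ^+ 2 = 1 ->
    simulates_meas Pi r nx 0 nz.

Definition Rsim (n : nat) : R :=
  sup [set r : R | exists Pi : 'I_n -> 'M[C]_2, is_povm Pi /\ simulates_P Pi r].

Definition Rpsim (n : nat) : R :=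
  sup [set r : R | exists Pi : 'I_n -> 'M[C]_2, is_povm Pi /\ simulates_Pp Pi r].

End Qubit.

(* Main.v *)
Require Import Defs.
From mathcomp Require Import all_boot all_order all_algebra.
From mathcomp Require Import boolp classical_sets reals.
From mathcomp Require Import complex.
From mathcomp Require Import ring lra.
Set Implicit Arguments. Unset Strict Implicit. Unset Printing Implicit Defensive.
Import Order.TTheory GRing.Theory Num.Theory.
Local Open Scope ring_scope.
Lemma ker_ex (F : fieldType) m n (A : 'M[F]_(m, n)) : (n < m)%N ->
  exists w : 'rV_m, w != 0 /\ w *m A = 0.
Proof.
move=> nm.
have : kermx A != 0.
  rewrite kermx_eq0 -row_leq_rank -ltnNge.
  exact: leq_ltn_trans (rank_leq_col A) nm.
case/matrix0Pn => i [j Hij].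
exists (row i (kermx A)); split.
  by apply/matrix0Pn; exists 0, j; rewrite mxE.
by rewrite -row_mul mulmx_ker row0.
Qed.

Section Core.
Variable R : realType.

Lemma core_i d (a : 'I_d.+1 -> R) (u : 'I_d.+1 -> 'I_d -> R) (r : R) i :
  (forall j, 0 <= a j) -> \sum_j a j = 1 -> (forall t, \sum_j u j t = 0) ->
  (forall j (n : 'I_d -> R), \sum_t n t ^+ 2 = 1 -> `|\sum_t n t * u j t| <= a j) ->
  (forall n : 'I_d -> R, \sum_t n t ^+ 2 = 1 -> exists p : 'I_d.+1 -> R,
      (forall j, 0 <= p j <= 1) /\ \sum_j p j * a j = 1/2 /\
      forall t, \sum_j p j * u j t = r / 2 * n t) ->
  r * (1 - a i) <= a i.
Proof.
move=> a0 suma sumu hnorm hsim.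
have splita : \sum_j a j = a i + \sum_(k < d) a (lift i k) by rewrite (bigD1_ord i).
have rest0 : 0 <= \sum_(k < d) a (lift i k) by apply: sumr_ge0.
pose B : 'M[R]_(1, d) := \row_k a (lift i k).
pose U : 'M[R]_(d, d) := \matrix_(t, k) u (lift i k) t.
have [w [w0 hw]] := @ker_ex _ (1 + d) d (col_mx B U) (ltnSn d).
pose l := lsubmx w 0 0.
pose nv := fun t => rsubmx w 0 t.
have eqk k : l * a (lift i k) + \sum_t nv t * u (lift i k) t = 0.
  move/matrixP: hw => /(_ 0 k).
  rewrite -[w]hsubmxK mul_row_col !mxE big_ord1 !mxE => e.
  apply: etrans e; rewrite /l /nv !mxE; congr (_ + _).
  by apply: eq_bigr => t _; rewrite !mxE.
have aile : a i <= 1 by lra.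
have [S0|Sn0] := eqVneq (\sum_t nv t ^+ 2) 0.
  have nv0 t : nv t = 0.
    apply/eqP; rewrite -sqrf_eq0; apply/eqP.
    exact: (psumr_eq0P (fun t _ => sqr_ge0 (nv t)) S0).
  have l0 : l != 0.
    apply: contraNneq w0 => l0; rewrite -[w]hsubmxK.
    have -> : lsubmx w = 0.
      by apply/matrixP => x y; rewrite (ord1 x) (ord1 y) [RHS]mxE -l0.
    have -> : rsubmx w = 0.
      by apply/matrixP => x y; rewrite (ord1 x) [RHS]mxE; apply: nv0.
    by rewrite row_mx0.
  have ak k : a (lift i k) = 0.
    have := eqk k; rewrite big1 ?addr0 => [/eqP|t _]; last by rewrite nv0 mul0r.
    by rewrite mulf_eq0 (negbTE l0) /= => /eqP.
  have : \sum_(k < d) a (lift i k) = 0 by rewrite big1.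
  move=> h; have ai1 : a i = 1 by lra.
  rewrite ai1 subrr mulr0; lra.
set S := \sum_t nv t ^+ 2 in Sn0.
have Sp : 0 < S by rewrite lt0r Sn0 /=; apply: sumr_ge0 => t _; exact: sqr_ge0.
pose s := Num.sqrt S.
have sp : 0 < s by rewrite sqrtr_gt0.
have ss : s ^+ 2 = S by rewrite sqr_sqrtr // ltW.
have sn0 : s != 0 by rewrite gt_eqF.
pose n := fun t => nv t / s.
pose lam := - l / s.
have hn : \sum_t n t ^+ 2 = 1.
  rewrite /n; under eq_bigr do rewrite expr_div_n.
  by rewrite -mulr_suml ss divff.
have eqk' k : \sum_t n t * u (lift i k) t = lam * a (lift i k).
  rewrite /n /lam; under eq_bigr do rewrite mulrAC.
  rewrite -mulr_suml.
  have -> : \sum_t nv t * u (lift i k) t = - (l * a (lift i k)) by move: (eqk k) => e; lra.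
  by rewrite /=; ring.
have [p [p01 [pa pu]]] := hsim n hn.
pose dot := fun j => \sum_t n t * u j t.
have h1 : \sum_j p j * dot j = r / 2.
  rewrite /dot; under eq_bigr do rewrite mulr_sumr.
  rewrite exchange_big /=.
  under eq_bigr => t _.
    under eq_bigr do rewrite mulrCA.
    rewrite -mulr_sumr pu.
  over.
  rewrite /=; under eq_bigr do rewrite mulrCA -expr2.
  by rewrite -mulr_sumr hn mulr1.
have h2 : dot i = - lam * (1 - a i).
  have : \sum_j dot j = 0.
    rewrite /dot exchange_big /=; apply: big1 => t _.
    by rewrite -mulr_sumr sumu mulr0.
  rewrite (bigD1_ord i) //=.
  under eq_bigr do rewrite /dot eqk'.
  rewrite -mulr_sumr => h.
  have e1 : 1 - a i = \sum_(k < d) a (lift i k) by lra.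
  rewrite e1; lra.
have h3 : \sum_j p j * dot j = p i * dot i + lam * (1/2 - p i * a i).
  rewrite (bigD1_ord i) //=; congr (_ + _).
  under eq_bigr do rewrite /dot eqk' mulrCA.
  rewrite -mulr_sumr; congr (_ * _).
  move: pa; rewrite (bigD1_ord i) //=; lra.
have hd := hnorm i n hn; rewrite -/(dot i) h2 in hd.
have hc : - a i <= - lam * (1 - a i) <= a i by rewrite -ler_norml.
have key : r * (1 - a i) = (lam * (1 - a i)) * (1 - 2 * p i).
  have : r / 2 = p i * (- lam * (1 - a i)) + lam * (1/2 - p i * a i) by rewrite -h2 -h3 h1.
  move=> e; have er : r = lam * (1 - 2 * p i) by nra.
  by rewrite er; ring.
have := p01 i; move: hc; rewrite key; nra.
Qed.

Lemma core d (a : 'I_d.+1 -> R) (u : 'I_d.+1 -> 'I_d -> R) (r : R) :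
  (forall j, 0 <= a j) -> \sum_j a j = 1 -> (forall t, \sum_j u j t = 0) ->
  (forall j (n : 'I_d -> R), \sum_t n t ^+ 2 = 1 -> `|\sum_t n t * u j t| <= a j) ->
  (forall n : 'I_d -> R, \sum_t n t ^+ 2 = 1 -> exists p : 'I_d.+1 -> R,
      (forall j, 0 <= p j <= 1) /\ \sum_j p j * a j = 1/2 /\
      forall t, \sum_j p j * u j t = r / 2 * n t) ->
  r * d%:R <= 1.
Proof.
move=> a0 suma sumu hnorm hsim.
have H : \sum_(i < d.+1) r * (1 - a i) <= \sum_i a i.
  by apply: ler_sum => i _; exact: core_i.
rewrite suma -mulr_sumr sumrB sumr_const card_ord suma in H.
move: H; rewrite -[d.+1]addn1 mulrnDr addrK //.
Qed.

Lemma sup_eq (E : set R) c : E c -> (forall x, E x -> x <= c) -> sup E = c.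
Proof.
move=> Ec ub; apply/le_anti/andP; split.
  by apply: ge_sup; [exists c | move=> x; exact: ub].
by apply: (ub_le_sup); [exists c => x; exact: ub | ].
Qed.
End Core.

Local Open Scope complex_scope.

Section S.
Variable R : realType.
Local Notation C := (R[i]).

Definition bl (a x y z : R) : 'M[C]_2 :=
  a%:C *: 1%:M + x%:C *: sigma_x R + y%:C *: sigma_y R + z%:C *: sigma_z R.

Ltac cfin := try (apply/eqP; rewrite eq_complex /=; apply/andP; split; apply/eqP; ring).
Ltac ord2 i := case: i => [[|[|?]] ?] //.

Definition blM (a x y z : R) : 'M[C]_2 := \matrix_(i, j)
  (if (i : nat) == 0%N then if (j : nat) == 0%N then (a + z) +i* 0 else x -i* y
   else if (j : nat) == 0%N then x +i* y else (a - z) +i* 0).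

Lemma blE a x y z : bl a x y z = blM a x y z.
Proof.
by apply/matrixP => i j; rewrite /bl /blM !mxE; ord2 i; ord2 j; rewrite /=; simpc; cfin.
Qed.

Lemma blD a x y z a' x' y' z' :
  bl a x y z + bl a' x' y' z' = bl (a + a') (x + x') (y + y') (z + z').
Proof.
rewrite !blE; apply/matrixP => i j; rewrite !mxE; ord2 i; ord2 j; rewrite /=; simpc; cfin.
Qed.

Lemma blZ c a x y z : c%:C *: bl a x y z = bl (c * a) (c * x) (c * y) (c * z).
Proof.
rewrite !blE; apply/matrixP => i j; rewrite !mxE; ord2 i; ord2 j; rewrite /=; simpc; cfin.
Qed.

Lemma bl0 : bl 0 0 0 0 = 0.
Proof.
rewrite !blE; apply/matrixP => i j; rewrite !mxE; ord2 i; ord2 j; rewrite /=; simpc; cfin.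
Qed.

Lemma bl1 : bl 1 0 0 0 = 1%:M.
Proof.
rewrite !blE; apply/matrixP => i j; rewrite !mxE; ord2 i; ord2 j; rewrite /=; simpc; cfin.
Qed.

Lemma bl_sum n (p a x y z : 'I_n -> R) :
  \sum_(k < n) (p k)%:C *: bl (a k) (x k) (y k) (z k) =
  bl (\sum_k p k * a k) (\sum_k p k * x k) (\sum_k p k * y k) (\sum_k p k * z k).
Proof.
elim: n p a x y z => [|n IH] p a x y z; first by rewrite !big_ord0 bl0.
by rewrite !big_ord_recr /= IH blZ blD.
Qed.

Lemma bl_inj a x y z a' x' y' z' : bl a x y z = bl a' x' y' z' ->
  [/\ a = a', x = x', y = y' & z = z'].
Proof.
rewrite !blE => /matrixP H.
have := H ord0 ord0; have := H ord_max ord_max; have := H ord0 ord_max.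
rewrite !mxE /= => -[e1 e2] [e3] [e4]; split; lra.
Qed.

Definition sgn (b : bool) : R := if b then 1 else -1.

Lemma noisyE r nx ny nz b : noisy_meas r nx ny nz b =
  bl (1/2) (sgn b * r * nx / 2) (sgn b * r * ny / 2) (sgn b * r * nz / 2).
Proof.
rewrite blE; apply/matrixP => i j; rewrite /noisy_meas !mxE; case: b;
 ord2 i; ord2 j; rewrite /=; simpc; cfin.
Qed.


Definition qf (M : 'M[C]_2) (v : 'cV[C]_2) : C :=
  ((\matrix_(i, j) (v j i)^* : 'rV[C]_2) *m M *m v) 0 0.

Definition E (a x y z p0 q0 p1 q1 : R) : R :=
  (a + z) * (p0 ^+ 2 + q0 ^+ 2) + (a - z) * (p1 ^+ 2 + q1 ^+ 2)
  + 2 * (x * (p0 * p1 + q0 * q1) + y * (p0 * q1 - q0 * p1)).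

Lemma qf_bl a x y z (v : 'cV[C]_2) :
  qf (bl a x y z) v = (E a x y z (complex.Re (v ord0 0)) (complex.Im (v ord0 0))
     (complex.Re (v ord_max 0)) (complex.Im (v ord_max 0))) +i* 0.
Proof.
rewrite /qf blE !mxE !big_ord_recr !big_ord0 /= !mxE !big_ord_recr !big_ord0 /= !mxE /=.
rewrite (_ : widen_ord _ _ = ord0); last by apply/val_inj.
case: (v ord0 0) => p0 q0; case: (v ord_max 0) => p1 q1 /=.
simpc; rewrite /E; cfin.
Qed.


Lemma E_ge0 a x y z p0 q0 p1 q1 : 0 <= a -> x ^+ 2 + y ^+ 2 + z ^+ 2 <= a ^+ 2 ->
  0 <= E a x y z p0 q0 p1 q1.
Proof.
move=> a0 hb.
set N := p0 ^+ 2 + q0 ^+ 2 + p1 ^+ 2 + q1 ^+ 2.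
set w1 := p0 ^+ 2 + q0 ^+ 2 - p1 ^+ 2 - q1 ^+ 2.
set w2 := 2 * (p0 * p1 + q0 * q1).
set w3 := 2 * (p0 * q1 - q0 * p1).
have -> : E a x y z p0 q0 p1 q1 = a * N + (x * w2 + y * w3 + z * w1).
  by rewrite /E /N /w1 /w2 /w3; ring.
have hN : w1 ^+ 2 + w2 ^+ 2 + w3 ^+ 2 = N ^+ 2 by rewrite /N /w1 /w2 /w3; ring.
have N0 : 0 <= N by rewrite /N; nra.
have L : (x * w2 + y * w3 + z * w1) ^+ 2 <= (x ^+ 2 + y ^+ 2 + z ^+ 2) * (w1 ^+ 2 + w2 ^+ 2 + w3 ^+ 2).
  have -> : (x ^+ 2 + y ^+ 2 + z ^+ 2) * (w1 ^+ 2 + w2 ^+ 2 + w3 ^+ 2) =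
    (x * w2 + y * w3 + z * w1) ^+ 2 + ((x * w3 - y * w2) ^+ 2 + (x * w1 - z * w2) ^+ 2
     + (y * w1 - z * w3) ^+ 2) by ring.
  by rewrite lerDl; rewrite !addr_ge0 // sqr_ge0.
rewrite hN in L.
have L2 : (x * w2 + y * w3 + z * w1) ^+ 2 <= (a * N) ^+ 2.
  apply: (le_trans L); rewrite exprMn; apply: ler_wpM2r; first nra. done.
have aN : 0 <= a * N by nra.
nra.
Qed.

Definition mkv (c0 c1 : C) : 'cV[C]_2 := \col_i (if (i : nat) == 0%N then c0 else c1).

Lemma psd_blP a x y z : psd (bl a x y z) <-> 0 <= a /\ x ^+ 2 + y ^+ 2 + z ^+ 2 <= a ^+ 2.
Proof.
split.
  case=> _ H.
  have HE p0 q0 p1 q1 : 0 <= E a x y z p0 q0 p1 q1.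
    have := H (mkv (p0 +i* q0) (p1 +i* q1)); rewrite -/(qf _ _) qf_bl !mxE /=.
    by rewrite complexr0 ler0c.
  have h1 := HE 1 0 0 0; have h2 := HE 0 0 1 0.
  rewrite /E in h1 h2 HE.
  have H3 mu : 0 <= (a + z) - 2 * mu * (x ^+ 2 + y ^+ 2) + (a - z) * mu ^+ 2 * (x ^+ 2 + y ^+ 2).
    have := HE 1 0 (- mu * x) (- mu * y). congr (_ <= _); ring.
  have al : 0 <= a + z by nra.
  have ga : 0 <= a - z by nra.
  split; first lra.
  have key : x ^+ 2 + y ^+ 2 <= (a + z) * (a - z).
    have [g0|g0] := eqVneq (a - z) 0.
      have [B0|B0] := eqVneq (x ^+ 2 + y ^+ 2) 0.
        rewrite B0 g0 mulr0 //.
      have Bp : 0 < x ^+ 2 + y ^+ 2 by rewrite lt0r B0 /=; nra.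
      have hmu : (a + z + 1) / (x ^+ 2 + y ^+ 2) * (x ^+ 2 + y ^+ 2) = a + z + 1.
        by rewrite mulfVK.
      have := H3 ((a + z + 1) / (x ^+ 2 + y ^+ 2)).
      rewrite g0 !mul0r addr0 -mulrA hmu.
      lra.
    have gp : 0 < a - z by rewrite lt0r g0.
    have := H3 (1 / (a - z)).
    set B := x ^+ 2 + y ^+ 2.
    have -> : a + z - 2 * (1 / (a - z)) * B + (a - z) * (1 / (a - z)) ^+ 2 * B
       = ((a + z) * (a - z) - B) / (a - z).
      by field; rewrite g0.
    by move=> h; have := mulr_ge0 h (ltW gp); rewrite mulfVK ?g0 //; lra.
  nra.
case=> a0 hb; split.
  rewrite !blE; apply/matrixP => i j; rewrite /adj !mxE; ord2 i; ord2 j; rewrite /=; simpc; cfin.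
move=> v; rewrite -/(qf _ _) qf_bl complexr0 ler0c; exact: E_ge0.
Qed.


Lemma mx2P (M N : 'M[C]_2) : M ord0 ord0 = N ord0 ord0 -> M ord0 ord_max = N ord0 ord_max ->
  M ord_max ord0 = N ord_max ord0 -> M ord_max ord_max = N ord_max ord_max -> M = N.
Proof.
move=> h1 h2 h3 h4; apply/matrixP => i j.
have [->|->] : i = ord0 \/ i = ord_max by ord2 i; [left|right]; apply/val_inj.
  by have [->|->] : j = ord0 \/ j = ord_max by ord2 j; [left|right]; apply/val_inj.
by have [->|->] : j = ord0 \/ j = ord_max by ord2 j; [left|right]; apply/val_inj.
Qed.

Definition pa (M : 'M[C]_2) := (complex.Re (M ord0 ord0) + complex.Re (M ord_max ord_max)) / 2.
Definition pz (M : 'M[C]_2) := (complex.Re (M ord0 ord0) - complex.Re (M ord_max ord_max)) / 2.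
Definition px (M : 'M[C]_2) := complex.Re (M ord0 ord_max).
Definition py (M : 'M[C]_2) := - complex.Im (M ord0 ord_max).

Lemma herm_bl (M : 'M[C]_2) : adj M = M -> M = bl (pa M) (px M) (py M) (pz M).
Proof.
move=> /matrixP H.
have h00 := H ord0 ord0; have h11 := H ord_max ord_max; have h10 := H ord_max ord0.
rewrite /adj !mxE in h00 h11 h10.
rewrite /pa /px /py /pz.
move: h00 h11 h10.
case E1 : (M ord0 ord0) => [p q]; case E2 : (M ord_max ord_max) => [p' q'].
case E3 : (M ord0 ord_max) => [s t]; case E4 : (M ord_max ord0) => [s' t'] /=.
move=> [e1] [e2] [e3 e4].
rewrite blE; apply: mx2P; rewrite mxE /= ?E1 ?E2 ?E3 ?E4;
  apply/eqP; rewrite eq_complex /=; apply/andP; split; apply/eqP; lra.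
Qed.


Definition o3_0 : 'I_3 := @Ordinal 3 0 isT.
Definition o3_1 : 'I_3 := @Ordinal 3 1 isT.
Definition o3_2 : 'I_3 := @Ordinal 3 2 isT.
Definition o2_0 : 'I_2 := @Ordinal 2 0 isT.
Definition o2_1 : 'I_2 := @Ordinal 2 1 isT.

Lemma sum3 (f : 'I_3 -> R) : \sum_t f t = f o3_0 + f o3_1 + f o3_2.
Proof.
rewrite !big_ord_recl big_ord0 addr0 addrA; congr (_ + _ + _); apply: congr1; exact/val_inj.
Qed.

Lemma sum2 (f : 'I_2 -> R) : \sum_t f t = f o2_0 + f o2_1.
Proof.
rewrite !big_ord_recl big_ord0 addr0; congr (_ + _); apply: congr1; exact/val_inj.
Qed.

Lemma ord3 (P : 'I_3 -> Prop) : P o3_0 -> P o3_1 -> P o3_2 -> forall t, P t.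
Proof.
move=> h0 h1 h2 t.
have [->|[->|->]] : t = o3_0 \/ t = o3_1 \/ t = o3_2.
  by case: t => [[|[|[|?]]] ?] //; [left|right;left|right;right]; apply/val_inj.
all: done.
Qed.

Lemma ord2' (P : 'I_2 -> Prop) : P o2_0 -> P o2_1 -> forall t, P t.
Proof.
move=> h0 h1 t.
have [->|->] : t = o2_0 \/ t = o2_1.
  by case: t => [[|[|?]] ?] //; [left|right]; apply/val_inj.
all: done.
Qed.

Lemma povm_params n (Pi : 'I_n -> 'M[C]_2) : is_povm Pi ->
  let a := fun k => pa (Pi k) in let x := fun k => px (Pi k) in
  let y := fun k => py (Pi k) in let z := fun k => pz (Pi k) in
  [/\ forall k, Pi k = bl (a k) (x k) (y k) (z k),
      forall k, 0 <= a k /\ x k ^+ 2 + y k ^+ 2 + z k ^+ 2 <= a k ^+ 2,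
      \sum_k a k = 1 & [/\ \sum_k x k = 0, \sum_k y k = 0 & \sum_k z k = 0]].
Proof.
case=> hpsd hsum a x y z.
have hb k : Pi k = bl (a k) (x k) (y k) (z k) by exact: herm_bl (hpsd k).1.
have : \sum_k (1 : R)%:C *: bl (a k) (x k) (y k) (z k) = bl 1 0 0 0.
  by rewrite bl1 -hsum; apply: eq_bigr => k _; rewrite scale1r hb.
rewrite bl_sum => /bl_inj; rewrite !(eq_bigr _ (fun k _ => mul1r _)).
case=> h1 h2 h3 h4.
split => //.
by move=> k; apply/psd_blP; rewrite -hb.
Qed.

Lemma sim_params n (Pi : 'I_n -> 'M[C]_2) a x y z r nx ny nz :
  (forall k, Pi k = bl (a k) (x k) (y k) (z k)) ->
  simulates_meas Pi r nx ny nz ->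
  exists p : 'I_n -> R, (forall j, 0 <= p j <= 1) /\ \sum_j p j * a j = 1/2 /\
    [/\ \sum_j p j * x j = r / 2 * nx, \sum_j p j * y j = r / 2 * ny &
        \sum_j p j * z j = r / 2 * nz].
Proof.
move=> hb [p [p0 [p1 hp]]]; exists (p true); split.
  by move=> j; have := p0 true j; have := p0 false j; have := p1 j; lra.
have := hp true; rewrite noisyE.
rewrite (eq_bigr (fun k => (p true k)%:C *: bl (a k) (x k) (y k) (z k))); last first.
  by move=> k _; rewrite hb.
rewrite bl_sum => /bl_inj [e1 e2 e3 e4].
by rewrite -e1 -e2 -e3 -e4 /sgn; split => //; split; ring.
Qed.

Lemma ub4 (Pi : 'I_4 -> 'M[C]_2) r : is_povm Pi -> simulates_P Pi r -> r * 3 <= 1.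
Proof.
move=> hp hsim; have [hb hpsd sa [sx sy sz]] := povm_params hp.
pose a := fun k => pa (Pi k); pose x := fun k => px (Pi k).
pose y := fun k => py (Pi k); pose z := fun k => pz (Pi k).
rewrite -/a -/x -/y -/z in hb hpsd sa sx sy sz.
pose u := fun k (t : 'I_3) => nth 0 [:: x k; y k; z k] t.
apply: (@core R 3 a u r).
- by move=> j; case: (hpsd j).
- exact: sa.
- by apply: ord3; rewrite /u /=.
- move=> j n; rewrite !sum3 /u /= => hn.
  have [h0 h1] := hpsd j.
  set d := _ + _ + _.
  have cs : d ^+ 2 <= a j ^+ 2.
    apply: le_trans h1.
    have -> : x j ^+ 2 + y j ^+ 2 + z j ^+ 2 =
       (n o3_0 ^+ 2 + n o3_1 ^+ 2 + n o3_2 ^+ 2) * (x j ^+ 2 + y j ^+ 2 + z j ^+ 2) by rewrite hn mul1r.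
    have -> : (n o3_0 ^+ 2 + n o3_1 ^+ 2 + n o3_2 ^+ 2) * (x j ^+ 2 + y j ^+ 2 + z j ^+ 2) =
      d ^+ 2 + ((n o3_0 * y j - n o3_1 * x j) ^+ 2 + (n o3_0 * z j - n o3_2 * x j) ^+ 2
        + (n o3_1 * z j - n o3_2 * y j) ^+ 2) by rewrite /d; ring.
    by rewrite lerDl !addr_ge0 // sqr_ge0.
  rewrite ler_norml; move: cs; rewrite /a /= => cs; apply/andP; split; nra.
- move=> n; rewrite sum3 => hn.
  have [p [p01 [pa' [px' py' pz']]]] := sim_params hb (hsim _ _ _ hn).
  exists p; split => //; split => //.
  by apply: ord3; rewrite /u /=.
Qed.


Lemma ub3 (Pi : 'I_3 -> 'M[C]_2) r : is_povm Pi -> simulates_Pp Pi r -> r * 2 <= 1.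
Proof.
move=> hp hsim; have [hb hpsd sa [sx sy sz]] := povm_params hp.
pose a := fun k => pa (Pi k); pose x := fun k => px (Pi k).
pose y := fun k => py (Pi k); pose z := fun k => pz (Pi k).
pose u := fun k (t : 'I_2) => nth 0 [:: x k; z k] t.
apply: (@core R 2 a u r).
- by move=> j; case: (hpsd j).
- exact: sa.
- by apply: ord2'; rewrite /u /=.
- move=> j n; rewrite !sum2 /u /= => hn.
  have [h0 h1] := hpsd j.
  set d := _ + _.
  have cs2 : d ^+ 2 <= x j ^+ 2 + z j ^+ 2.
    have -> : x j ^+ 2 + z j ^+ 2 =
       (n o2_0 ^+ 2 + n o2_1 ^+ 2) * (x j ^+ 2 + z j ^+ 2) by rewrite hn mul1r.
    have -> : (n o2_0 ^+ 2 + n o2_1 ^+ 2) * (x j ^+ 2 + z j ^+ 2) =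
      d ^+ 2 + (n o2_0 * z j - n o2_1 * x j) ^+ 2 by rewrite /d; ring.
    by rewrite lerDl sqr_ge0.
  have cs : d ^+ 2 <= a j ^+ 2.
    move: (sqr_ge0 (y j)) cs2 h1; rewrite /a /x /y /z /=; lra.
  rewrite ler_norml; move: cs; rewrite /a /= => cs; apply/andP; split; nra.
- move=> n; rewrite sum2 => hn.
  have [p [p01 [pa' [px' py' pz']]]] := sim_params hb (hsim _ _ hn).
  exists p; split => //; split => //.
  by apply: ord2'; rewrite /u /=.
Qed.


Lemma sum4 (f : 'I_4 -> R) : \sum_t f t =
  f (@Ordinal 4 0 isT) + f (@Ordinal 4 1 isT) + f (@Ordinal 4 2 isT) + f (@Ordinal 4 3 isT).
Proof.
rewrite !big_ord_recl big_ord0 addr0 !addrA; congr (_ + _ + _ + _); apply: congr1; exact/val_inj.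
Qed.

Lemma ord3' (P : 'I_3 -> Prop) : P (@Ordinal 3 0 isT) -> P (@Ordinal 3 1 isT) ->
  P (@Ordinal 3 2 isT) -> forall t, P t.
Proof. exact: ord3. Qed.

Lemma ord4 (P : 'I_4 -> Prop) : P (@Ordinal 4 0 isT) -> P (@Ordinal 4 1 isT) ->
  P (@Ordinal 4 2 isT) -> P (@Ordinal 4 3 isT) -> forall t, P t.
Proof.
move=> h0 h1 h2 h3 t.
have [->|[->|[->|->]]] : t = Ordinal (isT : 0 < 4)%N \/ t = Ordinal (isT : 1 < 4)%N \/
   t = Ordinal (isT : 2 < 4)%N \/ t = Ordinal (isT : 3 < 4)%N.
  by case: t => [[|[|[|[|?]]]] ?] //; [left|right;left|right;right;left|right;right;right];
     apply/val_inj.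
all: done.
Qed.

Lemma dot_le1 (b1 b2 b3 n1 n2 n3 : R) : b1 ^+ 2 + b2 ^+ 2 + b3 ^+ 2 = 1 ->
  n1 ^+ 2 + n2 ^+ 2 + n3 ^+ 2 = 1 -> -1 <= b1 * n1 + b2 * n2 + b3 * n3 <= 1.
Proof.
move=> hb hn; set d := _ + _ + _.
have : d ^+ 2 <= 1.
  have -> : 1 = (b1 ^+ 2 + b2 ^+ 2 + b3 ^+ 2) * (n1 ^+ 2 + n2 ^+ 2 + n3 ^+ 2) by rewrite hb hn mulr1.
  have -> : (b1 ^+ 2 + b2 ^+ 2 + b3 ^+ 2) * (n1 ^+ 2 + n2 ^+ 2 + n3 ^+ 2) =
      d ^+ 2 + ((b1 * n2 - b2 * n1) ^+ 2 + (b1 * n3 - b3 * n1) ^+ 2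
        + (b2 * n3 - b3 * n2) ^+ 2) by rewrite /d; ring.
  by rewrite lerDl !addr_ge0 // sqr_ge0.
move=> h; apply/andP; split; nra.
Qed.

Lemma p_ok (t : R) b : -1 <= t <= 1 -> 0 <= (1 + sgn b * t) / 2.
Proof. by case: b; rewrite /sgn; lra. Qed.

Lemma p_ok' (t : R) b : -1 <= t <= 1 -> 0 <= (1 + sgn (~~ b) * t) / 2.
Proof. by case: b; rewrite /sgn /=; lra. Qed.

Lemma bl_congr a x y z a' x' y' z' : a = a' -> x = x' -> y = y' -> z = z' ->
  bl a x y z = bl a' x' y' z'.
Proof. by move=> -> -> -> ->. Qed.

End S.

Section S2.
Variable R : realType.
Local Notation C := (R[i]).

Lemma lb3 : exists Pi : 'I_3 -> 'M[C]_2, is_povm Pi /\ simulates_Pp Pi (2^-1).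
Proof.
have [s hs] : exists s : R, s ^+ 2 = 3 / 4.
  by exists (Num.sqrt 3 / 2); rewrite expr_div_n sqr_sqrtr //; field.
pose bx := fun k : 'I_3 => nth (0 : R) [:: 0; s; - s] k.
pose bz := fun k : 'I_3 => nth (0 : R) [:: 1; - (1/2); - (1/2)] k.
have hb k : bx k ^+ 2 + 0 ^+ 2 + bz k ^+ 2 = 1.
  by move: k; apply: ord3'; rewrite /bx /bz /= ?sqrrN ?hs; field.
exists (fun k => bl (1/3) (bx k / 3) 0 (bz k / 3)); split.
  split.
    move=> k; apply/psd_blP; split; first lra.
    have := hb k; move=> h; have -> : (bx k / 3) ^+ 2 + 0 ^+ 2 + (bz k / 3) ^+ 2 =
      (bx k ^+ 2 + 0 ^+ 2 + bz k ^+ 2) / 9 by field.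
    rewrite h; lra.
  rewrite (eq_bigr (fun k => (1 : R)%:C *: bl (1 / 3) (bx k / 3) 0 (bz k / 3))); last first.
    by move=> k _; rewrite scale1r.
  rewrite bl_sum !sum3 /bx /bz /= -bl1; apply: bl_congr; by field.
move=> nx nz hn.
exists (fun b k => (1 + sgn R b * (bx k * nx + 0 * 0 + bz k * nz)) / 2); split.
  move=> b k; apply: p_ok; apply: dot_le1 => //; rewrite -hn; ring.
split; first by move=> k; rewrite /sgn /=; field.
move=> b; rewrite noisyE bl_sum !sum3 /bx /bz /=; apply: bl_congr.
- by field.
- rewrite [RHS](_ : _ = sgn R b * s ^+ 2 * nx / 3); last by field.
  by rewrite hs; field.
- by field.
- by field.
Qed.


Lemma lb4 : exists Pi : 'I_4 -> 'M[C]_2, is_povm Pi /\ simulates_P Pi (3^-1).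
Proof.
have [c hc] : exists c : R, c ^+ 2 = 1 / 3.
  by exists (Num.sqrt 3)^-1; rewrite exprVn sqr_sqrtr //; field.
pose bx := fun k : 'I_4 => c * nth (0 : R) [:: 1; 1; -1; -1] k.
pose by' := fun k : 'I_4 => c * nth (0 : R) [:: 1; -1; 1; -1] k.
pose bz := fun k : 'I_4 => c * nth (0 : R) [:: 1; -1; -1; 1] k.
have hb k : bx k ^+ 2 + by' k ^+ 2 + bz k ^+ 2 = 1.
  move: k; apply: ord4; rewrite /bx /by' /bz /= ?mulrN ?sqrrN ?mulr1 hc; by field.
exists (fun k => bl (1/4) (bx k / 4) (by' k / 4) (bz k / 4)); split.
  split.
    move=> k; apply/psd_blP; split; first lra.
    have := hb k; move=> h; have -> : (bx k / 4) ^+ 2 + (by' k / 4) ^+ 2 + (bz k / 4) ^+ 2 =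
      (bx k ^+ 2 + by' k ^+ 2 + bz k ^+ 2) / 16 by field.
    rewrite h; lra.
  rewrite (eq_bigr (fun k => (1 : R)%:C *: bl (1 / 4) (bx k / 4) (by' k / 4) (bz k / 4))); last first.
    by move=> k _; rewrite scale1r.
  rewrite bl_sum !sum4 /bx /by' /bz /= -bl1; apply: bl_congr; by field.
move=> nx ny nz hn.
exists (fun b k => (1 + sgn R b * (bx k * nx + by' k * ny + bz k * nz)) / 2); split.
  move=> b k; apply: p_ok; exact: dot_le1.
split; first by move=> k; rewrite /sgn /=; field.
move=> b; rewrite noisyE bl_sum !sum4 /bx /by' /bz /=; apply: bl_congr.
- by field.
- rewrite [RHS](_ : _ = sgn R b * c ^+ 2 * nx / 2); last by field.
  by rewrite hc; field.
- rewrite [RHS](_ : _ = sgn R b * c ^+ 2 * ny / 2); last by field.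
  by rewrite hc; field.
- rewrite [RHS](_ : _ = sgn R b * c ^+ 2 * nz / 2); last by field.
  by rewrite hc; field.
Qed.

End S2.

Local Close Scope complex_scope.

Theorem proposition3 (R : realType) :
  Rpsim R 3 = 2^-1 /\ Rsim R 4 = 3^-1.
Proof.
split.
- rewrite /Rpsim; apply: sup_eq; first exact: lb3.
  by move=> r [Pi [hp hs]]; have := ub3 hp hs; lra.
- rewrite /Rsim; apply: sup_eq; first exact: lb4.
  by move=> r [Pi [hp hs]]; have := ub4 hp hs; lra.
Qed.
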